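(* Let $\Omega$ be a locally compact metrisable space and $\{\mu_n\}_{n\in\mathbb{N}}\cup\{\mu\}\subset\mathcal{M}(\Omega)$. Then $\mu_n^+\to\mu^+$ weakly and $\mu_n^-\to\mu^-$ weakly if and only if $\mu_n\to\mu$ vaguely and $\limsup_{n\to\infty}\|\mu_n\|\le\|\mu\|$.
   Context: $\Omega$ carries its Borel $\sigma$-algebra. $\mathcal{M}(\Omega)$ denotes the set of finite signed Radon measures on $\Omega$: finite signed Borel measures $\mu$ with Hahn–Jordan decomposition $\mu=\mu^+-\mu^-$ whose variation $|\mu|=\mu^++\mu^-$ satisfies $|\mu|(A)=\sup\{|\mu|(K):K\subset A,\ K\text{ compact}\}$ for all Borel $A$; $\|\mu\|=|\mu|(\Omega)$. Weak convergence $\nu_n\to\nu$ means $\int f\,d\nu_n\to\int f\,d\nu$ for all bounded continuous $f:\Omega\to\mathbb{R}$; vague convergence means the same for all continuous $f$ with compact support. *)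

(* Defs.v *)
From HB Require Import structures.
From mathcomp Require Import all_boot all_order all_algebra.
From mathcomp Require Import all_classical all_reals all_analysis.
Set Implicit Arguments. Unset Strict Implicit. Unset Printing Implicit Defensive.
Import Order.TTheory GRing.Theory Num.Theory.
Import numFieldNormedType.Exports.
Local Open Scope classical_set_scope.
Local Open Scope ring_scope.

Definition borelT (T : ptopologicalType) := g_sigma_algebraType (@open T).

Section signed_measures.
Context {R : realType} {T : ptopologicalType}.
Local Notation BT := (borelT T).

Definition signed_measure := {charge set BT -> \bar R}.

Definition hahn_pos (mu : signed_measure) : set BT :=
  projT1 (cid (Hahn_decomposition mu)).
Definition hahn_neg (mu : signed_measure) : set BT :=
  projT1 (cid (projT2 (cid (Hahn_decomposition mu)))).
Definition hahnP (mu : signed_measure) :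
  hahn_decomposition mu (hahn_pos mu) (hahn_neg mu) :=
  projT2 (cid (projT2 (cid (Hahn_decomposition mu)))).

Definition mpos (mu : signed_measure) := jordan_pos (hahnP mu).
Definition mneg (mu : signed_measure) := jordan_neg (hahnP mu).
Definition mvar (mu : signed_measure) := charge_variation (hahnP mu).

Definition mnorm (mu : signed_measure) : \bar R := mvar mu setT.

Definition radon (mu : signed_measure) : Prop :=
  forall A : set BT, measurable A ->
    mvar mu A = ereal_sup [set mvar mu K | K in [set K : set BT |
                              compact (K : set T) /\ K `<=` A]].

Definition sintegral (mu : signed_measure) (f : T -> R) : \bar R :=
  (\int[mpos mu]_x (f x)%:E - \int[mneg mu]_x (f x)%:E)%E.

Definition bounded_continuous (f : T -> R) : Prop :=
  continuous f /\ exists M : R, forall x, `|f x| <= M.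

Definition compactly_supported_continuous (f : T -> R) : Prop :=
  continuous f /\ exists K : set T, compact K /\ forall x, ~ K x -> f x = 0.

Definition weak_cvg (nu_ : nat -> {measure set BT -> \bar R})
    (nu : {measure set BT -> \bar R}) : Prop :=
  forall f : T -> R, bounded_continuous f ->
    ((fun n => \int[nu_ n]_x (f x)%:E) @ \oo --> \int[nu]_x (f x)%:E)%E.

Definition vague_cvg (mu_ : nat -> signed_measure) (mu : signed_measure) : Prop :=
  forall f : T -> R, compactly_supported_continuous f ->
    (fun n => sintegral (mu_ n) f) @ \oo --> sintegral mu f.

End signed_measures.

(* Main.v *)
Require Import Defs.
From HB Require Import structures.
From mathcomp Require Import all_boot all_order all_algebra.
From mathcomp Require Import all_classical all_reals all_analysis.
From mathcomp Require Import ring lra measurable_realfun finmap.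
Set Implicit Arguments. Unset Strict Implicit. Unset Printing Implicit Defensive.
Import Order.TTheory GRing.Theory Num.Theory.
Import numFieldNormedType.Exports.
Local Open Scope classical_set_scope.
Local Open Scope ring_scope.

Section A.
Context {R : realType} {T : pseudoPMetricType R}.
Local Notation BT := (borelT T).

Lemma cont_meas (f : T -> R) : continuous f -> measurable_fun [set: BT] (f : BT -> R).
Proof.
move=> cf; apply: (measurability _ (RGenOpens.measurableE R)).
move=> _ [_ [a [b ->] <-]]; rewrite setTI; apply: sub_sigma_algebra.
apply: open_comp; last exact: interval_open.
by move=> x _; exact: cf.
Qed.

End A.

Section B.
Context {R : realType} {T : pseudoPMetricType R}.
Local Notation BT := (borelT T).

Definition bmf (f : T -> R) :=
  measurable_fun [set: BT] (f : BT -> R) /\ exists M, forall x, `|f x| <= M.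

Lemma bmf_int (m : {finite_measure set BT -> \bar R}) f :
  bmf f -> m.-integrable [set: BT] (EFin \o f).
Proof.
move=> [mf [M fM]]; apply: measurable_bounded_integrable => //.
  by rewrite ltey_eq fin_num_measure.
exists M; split; first exact: num_real.
move=> y My x _ /=; exact: le_trans (fM x) (ltW My).
Qed.

Lemma bmf_cst c : bmf (fun=> c).
Proof. by split; [exact: measurable_cst | exists `|c|]. Qed.

Lemma bmfD f g : bmf f -> bmf g -> bmf (fun x => f x + g x).
Proof.
move=> [mf [M fM]] [mg [N gN]]; split; first exact: measurable_funD.
exists (M + N) => x; exact: le_trans (ler_normD _ _) (lerD (fM x) (gN x)).
Qed.

Lemma bmfN f : bmf f -> bmf (fun x => - f x).
Proof.
move=> [mf [M fM]]; split; first exact: measurableT_comp.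
by exists M => x; rewrite normrN.
Qed.

Lemma bmfB f g : bmf f -> bmf g -> bmf (fun x => f x - g x).
Proof. by move=> bf bg; apply: bmfD => //; exact: bmfN. Qed.

Lemma bmfM f g : bmf f -> bmf g -> bmf (fun x => f x * g x).
Proof.
move=> [mf [M fM]] [mg [N gN]]; split; first exact: measurable_funM.
exists (M * N) => x; rewrite normrM; apply: ler_pM => //.
Qed.

Lemma bmf_cont f : continuous f -> (exists M, forall x, `|f x| <= M) -> bmf f.
Proof. by move=> cf bf; split => //; exact: cont_meas. Qed.

Lemma bmf_indic (A : set BT) : measurable A -> bmf (\1_A).
Proof.
move=> mA; split; first exact: measurable_indic.
by exists 1 => x; rewrite /indic; case: (x \in A); rewrite ?normr1 ?normr0.
Qed.

Variable m : {finite_measure set BT -> \bar R}.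
Local Notation RI f := (Rintegral m [set: BT] f).

Lemma EFin_RI f : bmf f -> (\int[m]_x (f x)%:E)%E = (RI f)%:E.
Proof. by move=> bf; rewrite /Rintegral fineK //; exact: integrable_fin_num (bmf_int _ bf). Qed.

Lemma RID f g : bmf f -> bmf g -> RI (fun x => f x + g x) = RI f + RI g.
Proof. by move=> bf bg; rewrite RintegralD //; exact: bmf_int. Qed.

Lemma RIB f g : bmf f -> bmf g -> RI (fun x => f x - g x) = RI f - RI g.
Proof. by move=> bf bg; rewrite RintegralB //; exact: bmf_int. Qed.

Lemma RIZ c f : bmf f -> RI (fun x => c * f x) = c * RI f.
Proof. by move=> bf; rewrite RintegralZl //; exact: bmf_int. Qed.

Lemma RI_le f g : bmf f -> bmf g -> (forall x, f x <= g x) -> RI f <= RI g.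
Proof. by move=> bf bg fg; apply: le_Rintegral => //; exact: bmf_int. Qed.

Lemma RI_cst c : RI (fun=> c) = c * fine (m [set: BT]).
Proof. by rewrite Rintegral_cst. Qed.

Lemma RI_indic (A : set BT) : measurable A -> RI (\1_A) = fine (m A).
Proof. by move=> mA; rewrite /Rintegral integral_indic // setIT. Qed.

Lemma RI_bound f g : bmf f -> bmf g -> (forall x, `|f x| <= g x) -> `|RI f| <= RI g.
Proof.
move=> bf bg fg; rewrite ler_norml; apply/andP; split.
  have -> : - RI g = RI (fun x => -1 * g x) by rewrite RIZ // mulN1r.
  apply: RI_le => //; first exact: bmfM (bmf_cst _) bg.
  by move=> x; rewrite mulN1r; have := fg x; rewrite ler_norml => /andP[].
by apply: RI_le => // x; have := fg x; rewrite ler_norml => /andP[].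
Qed.

Lemma RI_ge0 f : (forall x, 0 <= f x) -> 0 <= RI f.
Proof. by move=> f0; apply: Rintegral_ge0. Qed.

End B.

Section C.
Context {R : realType} {T : pseudoPMetricType R}.
Local Notation BT := (borelT T).
Local Notation RI m f := (Rintegral m [set: BT] f).

Lemma key (p q : {finite_measure set BT -> \bar R}) (f a u v : T -> R) (M : R) :
  bmf f -> bmf a -> bmf u -> bmf v -> 0 <= M ->
  (forall x, `|f x| <= M) -> (forall x, `|1 - a x| <= u x) -> (forall x, `|a x| <= v x) ->
  `|RI p f - (RI p (fun x => f x * a x) - RI q (fun x => f x * a x))| <=
    M * (RI p u + RI q v).
Proof.
move=> bf ba bu bv M0 fM au av.
have bfa := bmfM bf ba.
have -> : RI p f - (RI p (fun x => f x * a x) - RI q (fun x => f x * a x)) =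
   RI p (fun x => f x - f x * a x) + RI q (fun x => f x * a x).
  by rewrite RIB //; lra.
apply: le_trans (ler_normD _ _) _; rewrite mulrDr; apply: lerD.
  rewrite -RIZ //; apply: RI_bound => //; first exact: bmfB.
    exact: bmfM (bmf_cst _) bu.
  move=> x; rewrite -[X in `|X - _|]mulr1 -mulrBr normrM.
  by apply: ler_pM => //.
rewrite -RIZ //; apply: RI_bound => //; first exact: bmfM (bmf_cst _) bv.
by move=> x; rewrite normrM; apply: ler_pM.
Qed.

Lemma final_eps (x : R) (xn : nat -> R) (M : R) : 0 <= M ->
  (forall d, 0 < d -> exists (y : R) (yn : nat -> R) (D : R) (Dn : nat -> R),
     [/\ forall n, `|xn n - yn n| <= M * Dn n, `|x - y| <= M * D, D <= d,
        \forall n \near \oo, Dn n <= 3 * d &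
        \forall n \near \oo, `|y - yn n| <= d]) ->
  xn @ \oo --> x.
Proof.
move=> M0 H; apply/cvgrPdist_le => e e0.
have d0 : 0 < e / (4 * M + 1) by apply: divr_gt0 => //; lra.
have [y [yn [D [Dn [h1 h2 h3 h4 h5]]]]] := H _ d0.
have E : e = (4 * M + 1) * (e / (4 * M + 1)) by rewrite mulrC divfK //; lra.
set d := e / (4 * M + 1) in d0 h3 h4 h5 E.
near=> n.
have hD : Dn n <= 3 * d by near: n; exact: h4.
have hy : `|y - yn n| <= d by near: n; exact: h5.
have := h1 n; have := h2.
have : M * D <= M * d by rewrite ler_wpM2l.
have : M * Dn n <= M * (3 * d) by rewrite ler_wpM2l.
rewrite (distrC (xn n)).
have -> : x - xn n = (x - y) + (y - yn n) + (yn n - xn n) by ring.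
move=> ? ? ? ?.
apply: le_trans (ler_normD _ _) _.
apply: le_trans (lerD (ler_normD _ _) (lexx _)) _.
rewrite E; nra.
Unshelve. all: by end_near. Qed.

End C.

Section E.
Context {R : realType} {T : pseudoPMetricType R}.
Hypothesis hT : hausdorff_space T.
Hypothesis lcT : locally_compact [set: T].

Lemma cpt_nbhd (K : set T) : compact K -> exists C : set T, compact C /\ K `<=` C°.
Proof.
move=> cK.
have W (x : T) : {U : set T | nbhs x U /\ compact U}.
  apply: cid; have [U UWx [cptU _]] := @lcT x I.
  by exists U; split => //; rewrite withinET in UWx.
have cK' := cK; rewrite compact_cover in cK'.
have o1 : forall i, K i -> open ((proj1_sig (W i))°).
  by move=> i _; exact: open_interior.
have c1 : K `<=` cover K (fun x => (proj1_sig (W x))°).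
  by move=> x Kx; exists x => //; exact: (proj2_sig (W x)).1.
have [D' D'K KD'] := cK' T K (fun x => (proj1_sig (W x))°) o1 c1.
exists (\bigcup_(i in [set i | i \in D']) proj1_sig (W i)); split.
  by rewrite bigcup_fset; apply: bigsetU_compact => i _; exact: (proj2_sig (W i)).2.
move=> x /KD' [i Di xi]; apply: interiorS xi.
exact: (@bigcup_sup _ _ i [set` D'] (fun j => sval (W j)) Di).
Qed.

Lemma urysohn_cs (K B C : set T) : compact K -> closed B -> K `&` B = set0 ->
  compact C -> K `<=` C° -> exists g : T -> R,
  [/\ compactly_supported_continuous g, forall x, 0 <= g x <= 1,
      forall x, K x -> g x = 1 & forall x, B x -> g x = 0].
Proof.
move=> cK clB KB cC KC.
pose B' := B `|` ~` C°.
have clB' : closed B' by apply: closedU => //; exact/open_closedC/open_interior.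
have KB' : K `&` B' = set0.
  rewrite setIUr KB set0U; apply/disjoints_subset => x /KC Cx nCx; exact: nCx Cx.
have us : uniform_separator K B'.
  by apply: (proj1 (@normal_separatorP R T) (@pseudometric_normal R T)) => //;
     exact: compact_closed.
pose u := @Urysohn T R K B'.
exists (fun x => 1 - u x); split.
- split.
    move=> x; apply: cvgB; first exact: cvg_cst.
    exact: Urysohn_continuous.
  exists C; split => // x Cx; rewrite (_ : u x = 1) ?subrr //.
  apply: (Urysohn_sub1 us); exists x => //; right => /interior_subset; exact: Cx.
- move=> x; have := Urysohn_range (A := K) (B := B') (R := R) (ex_intro2 _ _ x I erefl).
  by rewrite /= in_itv /= => /andP[h1 h2]; rewrite /u; apply/andP; split; lra.
- move=> x Kx; rewrite (_ : u x = 0) ?subr0 //.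
  by apply: (Urysohn_sub0 us); exists x.
- move=> x Bx; rewrite (_ : u x = 1) ?subrr //.
  by apply: (Urysohn_sub1 us); exists x => //; left.
Qed.

End E.

Section D.
Context {R : realType} {T : pseudoPMetricType R}.
Local Notation BT := (borelT T).
Hypothesis hT : hausdorff_space T.
Variable mu : @signed_measure R T.
Local Notation P := (hahn_pos mu).
Local Notation N := (hahn_neg mu).

Lemma mP : measurable (P : set BT).
Proof. by have [[]] := hahnP mu. Qed.
Lemma mN : measurable (N : set BT).
Proof. by have [_ []] := hahnP mu. Qed.
Lemma PN0 : P `&` N = set0.
Proof. by have [] := hahnP mu. Qed.

Lemma mposE (A : set BT) : measurable A -> mpos mu A = mu (A `&` P).
Proof. by move=> mA; rewrite /mpos jordan_posE cjordan_posE /crestr0 mem_set. Qed.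

Lemma mnegE (A : set BT) : measurable A -> mneg mu A = (- mu (A `&` N))%E.
Proof. by move=> mA; rewrite /mneg jordan_negE cjordan_negE /crestr0 mem_set. Qed.

Lemma cpt_meas (K : set BT) : compact (K : set T) -> measurable K.
Proof.
move=> cK; rewrite -[K]setCK; apply: measurableC; apply: sub_sigma_algebra.
exact/closed_openC/(compact_closed hT).
Qed.

Lemma mposC (K : set BT) : measurable K ->
  mpos mu (~` K) = (mpos mu [set: BT] - mpos mu K)%E.
Proof.
move=> mK; have h := @measureD _ _ _ (mpos mu) setT K measurableT mK.
rewrite setTD setTI in h; apply: h; by rewrite ltey_eq fin_num_measure.
Qed.

Lemma mnegC (K : set BT) : measurable K ->
  mneg mu (~` K) = (mneg mu [set: BT] - mneg mu K)%E.
Proof.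
move=> mK; have h := @measureD _ _ _ (mneg mu) setT K measurableT mK.
rewrite setTD setTI in h; apply: h; by rewrite ltey_eq fin_num_measure.
Qed.

Lemma fin_mpos (A : set BT) : measurable A -> mpos mu A = (fine (mpos mu A))%:E.
Proof. by move=> mA; rewrite fineK // fin_num_measure. Qed.
Lemma fin_mneg (A : set BT) : measurable A -> mneg mu A = (fine (mneg mu A))%:E.
Proof. by move=> mA; rewrite fineK // fin_num_measure. Qed.

Lemma approx_pos (rad : radon mu) (d : R) : 0 < d ->
  exists K : set BT, [/\ compact (K : set T), K `<=` P & fine (mpos mu (~` K)) <= d].
Proof.
move=> d0; have := rad _ mP.
have mnP : mneg mu P = 0%E.
  by rewrite mnegE ?PN0 ?charge0 ?oppe0 //; exact: mP.
have -> : mvar mu P = mpos mu P.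
  by rewrite (_ : mvar mu P = (mpos mu P + mneg mu P)%E) // mnP adde0.
move=> eP.
have : (mpos mu P - d%:E < ereal_sup [set mvar mu K | K in [set K : set BT |
           compact (K : set T) /\ K `<=` P]])%E.
  rewrite -eP (fin_mpos mP) -EFinB lte_fin; lra.
move=> /ereal_sup_gt [_ [K [cK KP] <-]] hK; exists K; split => //.
have mK := cpt_meas cK.
have mnK : mneg mu K = 0%E.
  rewrite mnegE // (_ : K `&` N = set0) ?charge0 ?oppe0 //.
  by apply/seteqP; split => [x [/KP Px Nx]|//]; rewrite -PN0.
move: hK; rewrite (_ : mvar mu K = (mpos mu K + mneg mu K)%E) // mnK adde0.
have -> : mpos mu P = mpos mu [set: BT].
  by rewrite !mposE ?setTI ?setIid //; exact: mP.
rewrite mposC // (fin_mpos mK) (fin_mpos measurableT) -EFinB lte_fin /=.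
lra.
Qed.

Lemma approx_neg (rad : radon mu) (d : R) : 0 < d ->
  exists K : set BT, [/\ compact (K : set T), K `<=` N & fine (mneg mu (~` K)) <= d].
Proof.
move=> d0; have := rad _ mN.
have mpN : mpos mu N = 0%E.
  by rewrite mposE 1?setIC ?PN0 ?charge0 //; exact: mN.
have -> : mvar mu N = mneg mu N.
  by rewrite (_ : mvar mu N = (mpos mu N + mneg mu N)%E) // mpN add0e.
move=> eN.
have : (mneg mu N - d%:E < ereal_sup [set mvar mu K | K in [set K : set BT |
           compact (K : set T) /\ K `<=` N]])%E.
  rewrite -eN (fin_mneg mN) -EFinB lte_fin; lra.
move=> /ereal_sup_gt [_ [K [cK KN] <-]] hK; exists K; split => //.
have mK := cpt_meas cK.
have mpK : mpos mu K = 0%E.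
  rewrite mposE // (_ : K `&` P = set0) ?charge0 //.
  by apply/seteqP; split => [x [/KN Nx Px]|//]; rewrite -PN0.
move: hK; rewrite (_ : mvar mu K = (mpos mu K + mneg mu K)%E) // mpK add0e.
have -> : mneg mu N = mneg mu [set: BT].
  by rewrite !mnegE ?setTI ?setIid //; exact: mN.
rewrite mnegC // (fin_mneg mK) (fin_mneg measurableT) -EFinB lte_fin /=.
lra.
Qed.

End D.

Section F.
Context {R : realType} {T : pseudoPMetricType R}.
Local Notation BT := (borelT T).
Local Notation RI m f := (Rintegral m [set: BT] f).
Hypothesis hT : hausdorff_space T.
Hypothesis lcT : locally_compact [set: T].

Lemma csc_bmf (g : T -> R) : compactly_supported_continuous g ->
  (forall x, 0 <= g x <= 1) -> bmf g.
Proof.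
move=> [cg _] g01; apply: bmf_cont => //; exists 1 => x.
by have /andP[h1 h2] := g01 x; rewrite ger0_norm.
Qed.

Lemma indic_bound (m : {finite_measure set BT -> \bar R}) (K : set BT) (f : T -> R) :
  measurable K -> bmf f -> (forall x, K x -> f x <= 0) -> (forall x, f x <= 2) ->
  RI m f <= 2 * fine (m (~` K)).
Proof.
move=> mK bf fK f2.
have mCK : measurable (~` K) by exact: measurableC.
rewrite -RI_indic // -RIZ; last exact: bmf_indic.
apply: RI_le => //; first exact: bmfM (bmf_cst _) (bmf_indic mCK).
move=> x; rewrite indicE; have [Kx|nKx] := pselect (K x).
  by rewrite memNset ?mulr0 ?fK //.
by rewrite mem_set // mulr1.
Qed.

Lemma aux4 (d a b : R) : a <= 2 * (d / 4) -> b <= 2 * (d / 4) -> a + b <= d.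
Proof. lra. Qed.

Lemma exists_sep (mu : @signed_measure R T) (rad : radon mu) (d : R) : 0 < d ->
  exists g1 g2 : T -> R,
  [/\ compactly_supported_continuous g1, compactly_supported_continuous g2,
      (forall x, 0 <= g1 x <= 1), (forall x, 0 <= g2 x <= 1) &
      RI (mpos mu) (fun x => 1 - g1 x + g2 x) + RI (mneg mu) (fun x => 1 + g1 x - g2 x) <= d].
Proof.
move=> d0.
have d4 : 0 < d / 4 by apply: divr_gt0.
have [K1 [cK1 K1P hK1]] := approx_pos hT rad d4.
have [K2 [cK2 K2N hK2]] := approx_neg hT rad d4.
have K12 : K1 `&` K2 = set0.
  apply/seteqP; split => [x [/K1P Px /K2N Nx]|//].
  by rewrite -(PN0 mu).
have K21 : K2 `&` K1 = set0 by rewrite setIC.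
have [C1 [cC1 K1C1]] := cpt_nbhd lcT cK1.
have [C2 [cC2 K2C2]] := cpt_nbhd lcT cK2.
have [g1 [cs1 r1 e1 z1]] := urysohn_cs hT cK1 (compact_closed hT cK2) K12 cC1 K1C1.
have [g2 [cs2 r2 e2 z2]] := urysohn_cs hT cK2 (compact_closed hT cK1) K21 cC2 K2C2.
exists g1, g2; split => //.
have b1 := csc_bmf cs1 r1; have b2 := csc_bmf cs2 r2.
have mK1 := cpt_meas hT cK1; have mK2 := cpt_meas hT cK2.
have h1 : RI (mpos mu) (fun x => 1 - g1 x + g2 x) <= 2 * (d / 4).
  apply: le_trans (indic_bound _ mK1 _ _ _) _.
  - by apply: bmfD => //; apply: bmfB => //; exact: bmf_cst.
  - by move=> x K1x; rewrite e1 // z2 //; lra.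
  - by move=> x; have := r1 x; have := r2 x; move=> /andP[? ?] /andP[? ?]; lra.
  by rewrite ler_pM2l.
have h2 : RI (mneg mu) (fun x => 1 + g1 x - g2 x) <= 2 * (d / 4).
  apply: le_trans (indic_bound _ mK2 _ _ _) _.
  - by apply: bmfB => //; apply: bmfD => //; exact: bmf_cst.
  - by move=> x K2x; rewrite e2 // z1 //; lra.
  - by move=> x; have := r1 x; have := r2 x; move=> /andP[? ?] /andP[? ?]; lra.
  by rewrite ler_pM2l.
exact: aux4 h1 h2.
Qed.

End F.

Section G.
Context {R : realType} {T : pseudoPMetricType R}.
Local Notation BT := (borelT T).
Local Notation RI m f := (Rintegral m [set: BT] f).

Definition S (nu : @signed_measure R T) (f : T -> R) := RI (mpos nu) f - RI (mneg nu) f.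

Lemma sintegralE (nu : @signed_measure R T) (f : T -> R) : bmf f -> Defs.sintegral nu f = (S nu f)%:E.
Proof. by move=> bf; rewrite /Defs.sintegral /S EFinB -(EFin_RI (mpos nu) bf) -(EFin_RI (mneg nu) bf). Qed.

Lemma mnormE (nu : @signed_measure R T) : mnorm nu = (RI (mpos nu) (fun=> 1) + RI (mneg nu) (fun=> 1))%:E.
Proof.
rewrite !RI_cst !mul1r EFinD !fineK ?fin_num_measure //.
Qed.

Lemma csc_bounded (f : T -> R) : compactly_supported_continuous f ->
  exists M, 0 <= M /\ forall x, `|f x| <= M.
Proof.
move=> [cf [K [cK fK]]].
have cfK : compact (f @` K).
  by apply: continuous_compact => //; exact: continuous_subspaceT.
have [M [Mr HM]] := compact_bounded cfK.
have M1 : M < `|M| + 1 by have := ler_norm M; lra.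
exists (`|M| + 1); split; first by rewrite addr_ge0.
move=> x; have [Kx|nKx] := pselect (K x); last by rewrite fK // normr0 addr_ge0.
by apply: (HM _ M1); exists x.
Qed.

Lemma csc_bmf' (f : T -> R) : compactly_supported_continuous f -> bmf f.
Proof.
move=> cs; have [M [_ fM]] := csc_bounded cs.
by apply: bmf_cont; [exact: cs.1 | exists M].
Qed.

Lemma cscB (f g : T -> R) : compactly_supported_continuous f -> compactly_supported_continuous g ->
  compactly_supported_continuous (fun x => f x - g x).
Proof.
move=> [cf [K [cK fK]]] [cg [L [cL gL]]]; split.
  by move=> x; apply: cvgB; [exact: cf | exact: cg].
exists (K `|` L); split; first exact: compactU.
by move=> x /not_orP[nK nL]; rewrite fK // gL // subr0.
Qed.

Lemma cscM (f g : T -> R) : continuous f -> compactly_supported_continuous g ->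
  compactly_supported_continuous (fun x => f x * g x).
Proof.
move=> cf [cg [K [cK gK]]]; split.
  by move=> x; apply: cvgM; [exact: cf | exact: cg].
by exists K; split => // x nK; rewrite gK // mulr0.
Qed.

Lemma vague_real (mu_ : nat -> @signed_measure R T) mu : vague_cvg mu_ mu ->
  forall f, compactly_supported_continuous f ->
  (fun n => S (mu_ n) f) @ \oo --> S mu f.
Proof.
move=> V f cs; have bf := csc_bmf' cs.
have := V f cs; rewrite sintegralE // => /fine_cvg.
by under eq_fun do rewrite sintegralE //.
Qed.

Lemma limsup_ev (u : nat -> \bar R) (r : nat -> R) (l d : R) :
  (limn_esup u <= l%:E)%E -> (forall n, u n = (r n)%:E) -> 0 < d ->
  \forall n \near \oo, r n <= l + d.
Proof.
move=> L ur d0.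
have : (limn_esup u < (l + d)%:E)%E.
  by apply: le_lt_trans L _; rewrite lte_fin; lra.
rewrite /limn_esup /limf_esup => /ereal_inf_lt [_ [V Vinf <-]] hV.
apply: filterS Vinf => n Vn; rewrite -lee_fin -ur; apply/ltW.
apply: le_lt_trans hV; apply: ereal_sup_ubound; by exists n.
Qed.

Lemma Dform (p q : {finite_measure set BT -> \bar R}) (g1 g2 : T -> R) : bmf g1 -> bmf g2 ->
  RI p (fun x => 1 - g1 x + g2 x) + RI q (fun x => 1 + g1 x - g2 x) =
  (RI p (fun=> 1) + RI q (fun=> 1)) -
  (RI p (fun x => g1 x - g2 x) - RI q (fun x => g1 x - g2 x)).
Proof.
move=> b1 b2; have b12 := bmfB b1 b2.
have -> : RI p (fun x => 1 - g1 x + g2 x) = RI p (fun x => 1 - (g1 x - g2 x)).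
  by apply: eq_Rintegral => x _; ring.
have -> : RI q (fun x => 1 + g1 x - g2 x) = RI q (fun x => 1 + (g1 x - g2 x)).
  by apply: eq_Rintegral => x _; ring.
rewrite (RIB p (bmf_cst 1) b12) (RID q (bmf_cst 1) b12).
ring.
Qed.

End G.

Section H.
Context {R : realType} {T : pseudoPMetricType R}.
Local Notation BT := (borelT T).
Local Notation RI m f := (Rintegral m [set: BT] f).

Lemma to_ecvg (p_ : nat -> {finite_measure set BT -> \bar R})
    (p : {finite_measure set BT -> \bar R}) (f : T -> R) : bmf f ->
  (fun n => RI (p_ n) f) @ \oo --> RI p f ->
  (fun n => \int[p_ n]_x (f x)%:E)%E @ \oo --> (\int[p]_x (f x)%:E)%E.
Proof.
move=> bf h; rewrite EFin_RI //.
have -> : (fun n => \int[p_ n]_x (f x)%:E)%E = (fun n => (RI (p_ n) f)%:E).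
  by apply/funext => n; rewrite EFin_RI.
by apply: cvg_EFin => //; exact: nearW.
Qed.

Lemma mnormE' (nu : @signed_measure R T) :
  mnorm nu = (\int[mpos nu]_x (1%:E) + \int[mneg nu]_x (1%:E))%E.
Proof.
rewrite mnormE EFinD -(EFin_RI (mpos nu) (bmf_cst 1)) -(EFin_RI (mneg nu) (bmf_cst 1)).
by [].
Qed.

Lemma aux_r1 (a b : R) : 0 <= a <= 1 -> 0 <= b <= 1 ->
  [/\ `|1 - a| <= 1 - a + b, `|a| <= 1 + a - b, `|1 - b| <= 1 + a - b & `|b| <= 1 - a + b].
Proof.
move=> /andP[a0 a1] /andP[b0 b1].
have h1 : 0 <= 1 - a by lra.
have h2 : 0 <= 1 - b by lra.
rewrite (ger0_norm h1) (ger0_norm h2) (ger0_norm a0) (ger0_norm b0).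
split. lra. lra. lra. lra.
Qed.

Lemma aux_r2 (Dn D Nn N Sn Sh d : R) :
  Dn = Nn - Sn -> D = N - Sh -> Nn <= N + d -> `|Sh - Sn| <= d -> D <= d -> Dn <= 3 * d.
Proof.
move=> -> -> h1; rewrite ler_norml => /andP[h2 h3] h4; lra.
Qed.

Variables (mu_ : nat -> @signed_measure R T) (mu : @signed_measure R T).
Hypothesis V : vague_cvg mu_ mu.
Hypothesis L : (limn_esup (fun n => mnorm (mu_ n)) <= mnorm mu)%E.

Lemma Dn_ev (g1 g2 : T -> R) (d : R) : 0 < d ->
  compactly_supported_continuous g1 -> compactly_supported_continuous g2 ->
  RI (mpos mu) (fun x => 1 - g1 x + g2 x) + RI (mneg mu) (fun x => 1 + g1 x - g2 x) <= d ->
  \forall n \near \oo,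
    RI (mpos (mu_ n)) (fun x => 1 - g1 x + g2 x) +
    RI (mneg (mu_ n)) (fun x => 1 + g1 x - g2 x) <= 3 * d.
Proof.
move=> d0 cs1 cs2 hD.
have b1 := csc_bmf' cs1; have b2 := csc_bmf' cs2.
move: L; rewrite mnormE => L'.
have hN := limsup_ev L' (fun n => mnormE (mu_ n)) d0.
have := vague_real V (cscB cs1 cs2); move/cvgrPdist_le => /(_ d d0) hS.
near=> n.
apply: (aux_r2 (Dform _ _ b1 b2) (Dform _ _ b1 b2)) => //.
- near: n; exact: hN.
- near: n; exact: hS.
Unshelve. all: by end_near. Qed.

End H.

Theorem proposition2p8 (R : realType) (T : pseudoPMetricType R)
  (hT : hausdorff_space T) (lcT : locally_compact [set: T])
  (mu_ : nat -> @signed_measure R T) (mu : @signed_measure R T)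
  (rad_ : forall n, radon (mu_ n)) (rad : radon mu) :
  ((weak_cvg (fun n => mpos (mu_ n)) (mpos mu) /\
    weak_cvg (fun n => mneg (mu_ n)) (mneg mu)) <->
   (vague_cvg mu_ mu /\
    (limn_esup (fun n => mnorm (mu_ n)) <= mnorm mu)%E)).
Proof.
split.
- move=> [wp wn]; split.
  + move=> f cs; have [M [M0 fM]] := csc_bounded cs.
    have bc : bounded_continuous f by split; [exact: cs.1 | exists M].
    have bf := csc_bmf' cs.
    have ad : (\int[mpos mu]_x (f x)%:E +? - \int[mneg mu]_x (f x)%:E)%E.
      by apply: fin_num_adde_defl; rewrite fin_numN (EFin_RI (mneg mu) bf).
    exact: (cvgeB ad (wp f bc) (wn f bc)).
  + have bc1 : @bounded_continuous R T (fun=> 1).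
      by split; [move=> x; exact: cvg_cst | exists 1 => x; rewrite normr1].
    have h : (fun n => mnorm (mu_ n)) @ \oo --> mnorm mu.
      rewrite mnormE'.
      have -> : (fun n => mnorm (mu_ n)) = (fun n =>
          (\int[mpos (mu_ n)]_x (1%:E) + \int[mneg (mu_ n)]_x (1%:E))%E).
        by apply/funext => n; rewrite mnormE'.
      have ad : (\int[mpos mu]_x (1%:E) +? \int[mneg mu]_x (1%:E))%E.
        by apply: fin_num_adde_defl; rewrite (EFin_RI (mneg mu) (bmf_cst 1)).
      have := cvgeD ad (wp _ bc1) (wn _ bc1); apply; exact: nbhs_filter.
    by have [_ ->] := cvg_limn_einf_sup h.
- move=> [V L].
  split.
  + move=> f [cf [M0 fM0]].
    have fM x : `|f x| <= `|M0| by apply: le_trans (fM0 x) (ler_norm M0).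
    have bf : bmf f by apply: bmf_cont => //; exists M0.
    apply: (to_ecvg (p_ := fun n => mpos (mu_ n))) => //.
    apply: (final_eps (M := `|M0|)) => // d d0.
    have [g1 [g2 [cs1 cs2 r1 r2 hD]]] := exists_sep hT lcT rad d0.
    have b1 := csc_bmf' cs1; have b2 := csc_bmf' cs2.
    have bu : bmf (fun x => 1 - g1 x + g2 x) by apply: bmfD => //; apply: bmfB => //; exact: bmf_cst.
    have bv : bmf (fun x => 1 + g1 x - g2 x) by apply: bmfB => //; apply: bmfD => //; exact: bmf_cst.
    exists (S mu (fun x => f x * g1 x)), (fun n => S (mu_ n) (fun x => f x * g1 x)).
    exists (Rintegral (mpos mu) setT (fun x => 1 - g1 x + g2 x) +
      Rintegral (mneg mu) setT (fun x => 1 + g1 x - g2 x)).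
    exists (fun n => Rintegral (mpos (mu_ n)) setT (fun x => 1 - g1 x + g2 x) +
      Rintegral (mneg (mu_ n)) setT (fun x => 1 + g1 x - g2 x)).
    split => //.
    * move=> n; apply: key => // x; by have [] := aux_r1 (r1 x) (r2 x).
    * apply: key => // x; by have [] := aux_r1 (r1 x) (r2 x).
    * have := Dn_ev V L d0 cs1 cs2 hD; apply: filterS => n; exact.
    * by move: (vague_real V (cscM cf cs1)) => /cvgrPdist_le /(_ d d0).
  + move=> f [cf [M0 fM0]].
    have fM x : `|f x| <= `|M0| by apply: le_trans (fM0 x) (ler_norm M0).
    have bf : bmf f by apply: bmf_cont => //; exists M0.
    apply: (to_ecvg (p_ := fun n => mneg (mu_ n))) => //.
    apply: (final_eps (M := `|M0|)) => // d d0.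
    have [g1 [g2 [cs1 cs2 r1 r2 hD]]] := exists_sep hT lcT rad d0.
    have b1 := csc_bmf' cs1; have b2 := csc_bmf' cs2.
    have bu : bmf (fun x => 1 - g1 x + g2 x) by apply: bmfD => //; apply: bmfB => //; exact: bmf_cst.
    have bv : bmf (fun x => 1 + g1 x - g2 x) by apply: bmfB => //; apply: bmfD => //; exact: bmf_cst.
    exists (- S mu (fun x => f x * g2 x)), (fun n => - S (mu_ n) (fun x => f x * g2 x)).
    exists (Rintegral (mneg mu) setT (fun x => 1 + g1 x - g2 x) +
      Rintegral (mpos mu) setT (fun x => 1 - g1 x + g2 x)).
    exists (fun n => Rintegral (mneg (mu_ n)) setT (fun x => 1 + g1 x - g2 x) +
      Rintegral (mpos (mu_ n)) setT (fun x => 1 - g1 x + g2 x)).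
    split.
    * move=> n; rewrite /S opprB; apply: key => // x; by have [] := aux_r1 (r1 x) (r2 x).
    * rewrite /S opprB; apply: key => // x; by have [] := aux_r1 (r1 x) (r2 x).
    * by rewrite addrC.
    * have := Dn_ev V L d0 cs1 cs2 hD; apply: filterS => n.
      by rewrite addrC.
    * move: (vague_real V (cscM cf cs2)) => /cvgrPdist_le /(_ d d0).
      by apply: filterS => n; rewrite -opprD normrN.
Qed.
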